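(* Let $\mathcal{L}$ be a language with semantic structure $\mathcal{S}=(\Sigma,I)$, and assume $\mathcal{L}$ is closed under infinite logical conjunction. Let $\mathcal{S}^\sharp=(\mathrm{AD}_{\mathcal{L}},I^\sharp)$ be an abstract semantic structure on $\mathrm{AD}_{\mathcal{L}}$. If $[\![\cdot]\!]_{\mathcal{S}^\sharp}$ is strongly preserving for $\mathcal{L}$, then $I^\sharp=I^{\mathrm{AD}_{\mathcal{L}}}$.
   Context: A language $\mathcal{L}$ has formulae $\varphi::=p\mid f(\varphi_1,\dots,\varphi_n)$, $p$ in a set $AP$ of atoms, $f$ in a finite set $Op$ of operators of arity $\ge1$. A semantic structure $\mathcal{S}=(\Sigma,I)$ gives $\mathbf{p}=I(p)\subseteq\Sigma$ and $\mathbf{f}=I(f):\wp(\Sigma)^{n}\to\wp(\Sigma)$, with $[\![p]\!]_{\mathcal{S}}=\mathbf{p}$, $[\![f(\varphi_1,..)]\!]_{\mathcal{S}}=\mathbf{f}([\![\varphi_1]\!]_{\mathcal{S}},..)$. $\mathcal{L}$ is closed under infinite logical conjunction if for every $\Phi\subseteq\mathcal{L}$ (including $\Phi=\varnothing$) there is $\psi\in\mathcal{L}$ with $\bigcap_{\varphi\in\Phi}[\![\varphi]\!]_{\mathcal{S}}=[\![\psi]\!]_{\mathcal{S}}$ (empty intersection $=\Sigma$). $\mathrm{AD}_{\mathcal{L}}$ is the abstract domain of $\wp(\Sigma)_\subseteq$ whose elements are the intersections of subfamilies of $\{[\![\varphi]\!]_{\mathcal{S}}\mid\varphi\in\mathcal{L}\}$,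 ordered by inclusion, with $\alpha(S)=\bigcap\{[\![\varphi]\!]_{\mathcal{S}}\mid S\subseteq[\![\varphi]\!]_{\mathcal{S}}\}$ and $\gamma$ the inclusion. An abstract semantic structure $(A,I^\sharp)$ on an abstract domain $A$ (Galois insertion $(\alpha,\wp(\Sigma),A,\gamma)$) assigns $I^\sharp(p)\in A$ and $I^\sharp(f):A^n\to A$ and induces $[\![\cdot]\!]_{\mathcal{S}^\sharp}:\mathcal{L}\to A$ compositionally; it is strongly preserving for $\mathcal{L}$ if for all $\varphi$, $S$: $\alpha(S)\le_A[\![\varphi]\!]_{\mathcal{S}^\sharp}\iff S\subseteq[\![\varphi]\!]_{\mathcal{S}}$. The best-correct-approximation interpretation is $I^A(p)=\alpha(\mathbf{p})$, $I^A(f)=\alpha\circ\mathbf{f}\circ(\gamma,\dots,\gamma)$. *)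

(* Defs.v *)
From mathcomp Require Import all_boot.
From mathcomp Require Import boolp classical_sets.
Set Implicit Arguments. Unset Strict Implicit.
Arguments nat_of_ord : simpl never. Unset Printing Implicit Defensive.
Local Open Scope classical_set_scope.

Section Lang.
Variables (AP : Type) (Op : finType) (ar : Op -> nat).

Inductive formula : Type :=
| Atom of AP
| App (f : Op) of ('I_(ar f) -> formula).

Variable Sigma : Type.

Record sem_struct : Type := SemStruct {
  I_atom : AP -> set Sigma;
  I_op : forall f : Op, ('I_(ar f) -> set Sigma) -> set Sigma }.
Arguments I_op : clear implicits.

Fixpoint sem (S : sem_struct) (phi : formula) : set Sigma :=
  match phi with
  | Atom p => I_atom S p
  | App f args => I_op S f (fun i => sem S (args i))
  end.

Definition closed_inf_conj (S : sem_struct) : Prop :=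
  forall Phi : set formula, exists psi : formula,
    \bigcap_(phi in Phi) sem S phi = sem S psi.

Definition isAD (S : sem_struct) (X : set Sigma) : Prop :=
  exists Phi : set formula, X = \bigcap_(phi in Phi) sem S phi.

Definition AD (S : sem_struct) : Type := {X : set Sigma | isAD S X}.

Definition gammaAD (S : sem_struct) (a : AD S) : set Sigma := proj1_sig a.

Definition alpha_set (S : sem_struct) (X : set Sigma) : set Sigma :=
  \bigcap_(phi in [set phi | X `<=` sem S phi]) sem S phi.

Lemma alpha_isAD (S : sem_struct) (X : set Sigma) : isAD S (alpha_set S X).
Proof. by exists [set phi | X `<=` sem S phi]. Qed.

Definition alphaAD (S : sem_struct) (X : set Sigma) : AD S :=
  exist _ (alpha_set S X) (alpha_isAD S X).

Definition leAD (S : sem_struct) (a b : AD S) : Prop := gammaAD a `<=` gammaAD b.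

Record abs_struct (S : sem_struct) : Type := AbsStruct {
  Ia_atom : AP -> AD S;
  Ia_op : forall f : Op, ('I_(ar f) -> AD S) -> AD S }.
Arguments Ia_op : clear implicits.

Fixpoint asem (S : sem_struct) (Ia : abs_struct S) (phi : formula) : AD S :=
  match phi with
  | Atom p => Ia_atom Ia p
  | App f args => Ia_op S Ia f (fun i => asem Ia (args i))
  end.

Definition strongly_preserving (S : sem_struct) (Ia : abs_struct S) : Prop :=
  forall (phi : formula) (X : set Sigma),
    leAD (alphaAD S X) (asem Ia phi) <-> X `<=` sem S phi.

(* best correct approximation interpretation I^{AD_L} *)
Definition bca (S : sem_struct) : abs_struct S :=
  AbsStruct (fun p => alphaAD S (I_atom S p))
            (fun f a => alphaAD S (I_op S f (fun i => gammaAD (a i)))).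

End Lang.

(* Main.v *)
Require Import Defs.
From mathcomp Require Import all_boot.
From mathcomp Require Import boolp classical_sets.
Local Open Scope classical_set_scope.

Section Aux.
Variables (AP : Type) (Op : finType) (ar : Op -> nat) (Sigma : Type)
  (S : @sem_struct AP Op ar Sigma).

Lemma AD_eq (a b : AD S) : gammaAD a = gammaAD b -> a = b.
Proof.
case: a => x px; case: b => y py /= e; subst; congr exist; exact: Prop_irrelevance.
Qed.

Lemma alpha_sem phi : alpha_set S (sem S phi) = sem S phi.
Proof.
apply/seteqP; split => x.
- by move=> H; apply: H.
- by move=> hx psi /= hsub; exact: hsub.
Qed.

Lemma alpha_gamma (a : AD S) : alpha_set S (gammaAD a) = gammaAD a.
Proof.
case: a => X [Phi eX] /=; rewrite eX.
apply/seteqP; split => x.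
- move=> H phi Pphi; apply: H => /= y Hy; exact: Hy.
- by move=> hx psi /= hsub; exact: hsub.
Qed.
End Aux.

Theorem theorem5p5 (AP : Type) (Op : finType) (ar : Op -> nat)
  (ar_pos : forall f : Op, 0 < ar f)
  (Sigma : Type) (S : @sem_struct AP Op ar Sigma)
  (Hconj : closed_inf_conj S)
  (Ia : @abs_struct AP Op ar Sigma S)
  (Hsp : strongly_preserving Ia) :
  Ia = bca S.
Proof.
have key : forall phi, gammaAD (asem Ia phi) = sem S phi.
  move=> phi; apply/seteqP; split.
  - apply/(Hsp phi (gammaAD (asem Ia phi))).
    by rewrite /leAD /= alpha_gamma.
  - have := proj2 (Hsp phi (sem S phi)) (fun x hx => hx).
    by rewrite /leAD /= alpha_sem.
have repr : forall a : AD S, exists psi, a = asem Ia psi.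
  case=> X [Phi eX]; have [psi Hpsi] := Hconj Phi.
  exists psi; apply: AD_eq; rewrite key /= eX; exact: Hpsi.
have Hat : forall p, Ia_atom Ia p = Ia_atom (bca S) p.
  move=> p; apply: AD_eq; have := @alpha_sem _ _ _ _ S (Atom _ p); rewrite /= => ->.
  exact: (key (Atom _ p)).
have Hop : forall f a, @Ia_op _ _ _ _ S Ia f a = @Ia_op _ _ _ _ S (bca S) f a.
  move=> f a.
  pose psi i := projT1 (cid (repr (a i))).
  have ea : a = fun i => asem Ia (psi i).
    apply: funext => i; exact: (projT2 (cid (repr (a i)))).
  apply: AD_eq; rewrite ea /=.
  have := key (@App _ _ _ f psi); rewrite /= => ->.
  have -> : (fun i => gammaAD (asem Ia (psi i))) = (fun i => sem S (psi i)).
    by apply: funext => i; rewrite key.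
  by have := @alpha_sem _ _ _ _ S (@App _ _ _ f psi); rewrite /= => ->.
move: Hat Hop; case: Ia Hsp key repr => ia io _ _ _ /= Hat Hop.
rewrite /bca; congr AbsStruct.
- by apply: funext => p; rewrite Hat.
- apply: functional_extensionality_dep => f; apply: funext => a; exact: Hop.
Qed.
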